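(* For every WHB-algebra $\mathbf A$, the congruence lattice $\mathrm{Con}_{\mathcal{WHB}}(\mathbf A)$ of $\mathbf A$ is isomorphic to the congruence lattice $\mathrm{Con}_{\mathcal{TBA}}(T(\mathbf A))$ of the tense algebra $T(\mathbf A)$.
   Context: A WHB-algebra is an algebra $(A,\wedge,\vee,\to,\leftarrow,0,1)$ such that $(A,\wedge,\vee,0,1)$ is a bounded distributive lattice and for all $a,b,c\in A$: $a\to a=1$; $a\to(b\wedge c)=(a\to b)\wedge(a\to c)$; $(a\vee b)\to c=(a\to c)\wedge(b\to c)$; $(a\to b)\wedge(b\to c)\le a\to c$; $a\leftarrow a=0$; $(a\vee b)\leftarrow c=(a\leftarrow c)\vee(b\leftarrow c)$; $a\leftarrow(b\wedge c)=(a\leftarrow b)\vee(a\leftarrow c)$; $a\leftarrow c\le(a\leftarrow b)\vee(b\leftarrow c)$; $a\wedge((a\to b)\leftarrow 0)\le b$; $a\le b\vee(1\to(a\leftarrow b))$. A tense algebra is $(\mathbf B,G,H)$ with $\mathbf B$ a Boolean algebra and unary $G,H$ such that, with $P(x)=\neg H(\neg x)$, $F(x)=\neg G(\neg x)$: $P(x)\le y\iff x\le G(y)$ and $F(x)\le y\iff x\le H(y)$. For a WHB-algebra $\mathbf A$: $X(\mathbf A)$ is its set of prime filters, $\sigma_{\mathbf A}(a)=\{P\colon a\in P\}$, $\tau_{\mathbf A}$ the topology with subbase $\{\sigma_{\mathbf A}(a)\}\cup\{X(\mathbf A)\setminus\sigma_{\mathbf A}(a)\}$; $(P,Q)\in R_{\mathbf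 A}$ iff for all $a,b$ ($a\to b\in P$, $a\in Q$ imply $b\in Q$); $(P,Q)\in S_{\mathbf A}$ iff for all $a,b$ ($a\in Q$, $b\notin Q$ imply $a\leftarrow b\in P$). $T(\mathbf A)$ is the Boolean algebra of $\tau_{\mathbf A}$-clopen subsets of $X(\mathbf A)$ with $G_{\mathbf A}(U)=\{P\colon R_{\mathbf A}(P)\subseteq U\}$ and $H_{\mathbf A}(U)=\{P\colon S_{\mathbf A}(P)\subseteq U\}$, where $\mathcal R(P)=\{Q\colon(P,Q)\in\mathcal R\}$. *)

(* Defs.v *)
From Stdlib Require Import List.
Import ListNotations.

Record WHBsig := {
  wcar :> Type;
  wmeet : wcar -> wcar -> wcar;
  wjoin : wcar -> wcar -> wcar;
  wimp  : wcar -> wcar -> wcar;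
  wcoimp : wcar -> wcar -> wcar;
  wzero : wcar;
  wone  : wcar
}.

Section WHBdefs.
Variable A : WHBsig.
Local Notation "a /\' b" := (wmeet A a b) (at level 40, left associativity).
Local Notation "a \/' b" := (wjoin A a b) (at level 50, left associativity).
Local Notation "a ~> b" := (wimp A a b) (at level 60, right associativity).
Local Notation "a <~ b" := (wcoimp A a b) (at level 60, right associativity).
Local Notation "0" := (wzero A).
Local Notation "1" := (wone A).

Definition wle (a b : A) : Prop := a /\' b = a.

Definition bdl_axioms : Prop :=
  (forall a b c : A, a /\' (b /\' c) = (a /\' b) /\' c) /\
  (forall a b c : A, a \/' (b \/' c) = (a \/' b) \/' c) /\
  (forall a b : A, a /\' b = b /\' a) /\
  (forall a b : A, a \/' b = b \/' a) /\
  (forall a b : A, a /\' (a \/' b) = a) /\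
  (forall a b : A, a \/' (a /\' b) = a) /\
  (forall a b c : A, a /\' (b \/' c) = (a /\' b) \/' (a /\' c)) /\
  (forall a : A, a /\' 0 = 0) /\
  (forall a : A, a \/' 1 = 1).

Definition is_WHB : Prop :=
  bdl_axioms /\
  (forall a : A, a ~> a = 1) /\
  (forall a b c : A, a ~> (b /\' c) = (a ~> b) /\' (a ~> c)) /\
  (forall a b c : A, (a \/' b) ~> c = (a ~> c) /\' (b ~> c)) /\
  (forall a b c : A, wle ((a ~> b) /\' (b ~> c)) (a ~> c)) /\
  (forall a : A, a <~ a = 0) /\
  (forall a b c : A, (a \/' b) <~ c = (a <~ c) \/' (b <~ c)) /\
  (forall a b c : A, a <~ (b /\' c) = (a <~ b) \/' (a <~ c)) /\
  (forall a b c : A, wle (a <~ c) ((a <~ b) \/' (b <~ c))) /\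
  (forall a b : A, wle (a /\' ((a ~> b) <~ 0)) b) /\
  (forall a b : A, wle a (b \/' (1 ~> (a <~ b)))).

Definition WHB_congruence (th : A -> A -> Prop) : Prop :=
  (forall a, th a a) /\
  (forall a b, th a b -> th b a) /\
  (forall a b c, th a b -> th b c -> th a c) /\
  (forall a b c d, th a b -> th c d -> th (a /\' c) (b /\' d)) /\
  (forall a b c d, th a b -> th c d -> th (a \/' c) (b \/' d)) /\
  (forall a b c d, th a b -> th c d -> th (a ~> c) (b ~> d)) /\
  (forall a b c d, th a b -> th c d -> th (a <~ c) (b <~ d)).

Definition prime_filter (P : A -> Prop) : Prop :=
  P 1 /\ ~ P 0 /\
  (forall a b, P a -> P b -> P (a /\' b)) /\
  (forall a b, P a -> wle a b -> P b) /\
  (forall a b, P (a \/' b) -> P a \/ P b).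

Definition XA : Type := { P : A -> Prop | prime_filter P }.

Definition sigmaA (a : A) : XA -> Prop := fun P => proj1_sig P a.

Definition subbasic (s : bool * A) : XA -> Prop :=
  fun P => if fst s then sigmaA (snd s) P else ~ sigmaA (snd s) P.

(* open sets of the topology tau_A generated by the subbase:
   unions of finite intersections of subbasic sets *)
Definition tau_open (U : XA -> Prop) : Prop :=
  forall P, U P -> exists l : list (bool * A),
    (forall s, In s l -> subbasic s P) /\
    (forall Q, (forall s, In s l -> subbasic s Q) -> U Q).

Definition tau_clopen (U : XA -> Prop) : Prop :=
  tau_open U /\ tau_open (fun P => ~ U P).

Definition RA (P Q : XA) : Prop :=
  forall a b, proj1_sig P (a ~> b) -> proj1_sig Q a -> proj1_sig Q b.
Definition SA (P Q : XA) : Prop :=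
  forall a b, proj1_sig Q a -> ~ proj1_sig Q b -> proj1_sig P (a <~ b).

Definition GA (U : XA -> Prop) : XA -> Prop := fun P => forall Q, RA P Q -> U Q.
Definition HA (U : XA -> Prop) : XA -> Prop := fun P => forall Q, SA P Q -> U Q.
Definition Tmeet (U V : XA -> Prop) : XA -> Prop := fun P => U P /\ V P.
Definition Tjoin (U V : XA -> Prop) : XA -> Prop := fun P => U P \/ V P.
Definition Tcompl (U : XA -> Prop) : XA -> Prop := fun P => ~ U P.

(* congruences of the tense algebra T(A) = (Clop(X(A)), cap, cup, compl,
   empty, X, G_A, H_A): equivalence relations on the set of clopens,
   compatible with all operations (constants are trivially compatible). *)
Definition TBA_congruence (th : (XA -> Prop) -> (XA -> Prop) -> Prop) : Prop :=
  (forall U V, th U V -> tau_clopen U /\ tau_clopen V) /\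
  (forall U, tau_clopen U -> th U U) /\
  (forall U V, th U V -> th V U) /\
  (forall U V W, th U V -> th V W -> th U W) /\
  (forall U V U' V', th U V -> th U' V' -> th (Tmeet U U') (Tmeet V V')) /\
  (forall U V U' V', th U V -> th U' V' -> th (Tjoin U U') (Tjoin V V')) /\
  (forall U V, th U V -> th (Tcompl U) (Tcompl V)) /\
  (forall U V, th U V -> th (GA U) (GA V)) /\
  (forall U V, th U V -> th (HA U) (HA V)).

End WHBdefs.

Definition rel_sub {T : Type} (r s : T -> T -> Prop) : Prop :=
  forall x y, r x y -> s x y.
Definition rel_eq {T : Type} (r s : T -> T -> Prop) : Prop :=
  forall x y, r x y <-> s x y.

(* Con_WHB(A) and Con_TBA(T(A)) are isomorphic as lattices: an order
   isomorphism (w.r.t. inclusion) between the two posets of congruences. *)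
Definition con_lattices_isomorphic (A : WHBsig) : Prop :=
  exists (f : (A -> A -> Prop) -> ((XA A -> Prop) -> (XA A -> Prop) -> Prop))
         (g : ((XA A -> Prop) -> (XA A -> Prop) -> Prop) -> (A -> A -> Prop)),
    (forall th, WHB_congruence A th -> TBA_congruence A (f th)) /\
    (forall ps, TBA_congruence A ps -> WHB_congruence A (g ps)) /\
    (forall th, WHB_congruence A th -> rel_eq (g (f th)) th) /\
    (forall ps, TBA_congruence A ps -> rel_eq (f (g ps)) ps) /\
    (forall th1 th2, WHB_congruence A th1 -> WHB_congruence A th2 ->
       (rel_sub th1 th2 <-> rel_sub (f th1) (f th2))).

(* Main.v *)
Require Import Defs.
From Stdlib Require Import List Classical FunctionalExtensionality PropExtensionality.
Import ListNotations.
From mathcomp Require classical_sets.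

Lemma set_ext_gen {T} (U V : T -> Prop) : (forall t, U t <-> V t) -> U = V.
Proof. intro H; apply functional_extensionality; intro t; apply propositional_extensionality; auto. Qed.

Lemma zorn_gen {T} (Cd : (T->Prop)->Prop) (S0 : T->Prop) : Cd S0 ->
  (forall F : (T->Prop)->Prop, (exists X, F X) -> (forall X, F X -> Cd X) ->
     (forall X Y, F X -> F Y -> (forall t, X t -> Y t) \/ (forall t, Y t -> X t)) ->
     Cd (fun t => exists X, F X /\ X t)) ->
  exists M, Cd M /\ (forall t, S0 t -> M t) /\
    (forall M', Cd M' -> (forall t, M t -> M' t) -> forall t, M' t -> M t).
Proof.
  intros H0 Hch.
  destruct (@classical_sets.Zorn_bigcup T (fun S => Cd (fun t => S0 t \/ S t))) as [A0 [PA maxA]].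
  - intros F HF Htot.
    destruct (classic (exists X, F X)) as [[X0 FX0]|Hne].
    + set (F' := fun Y : T -> Prop => exists X, F X /\ Y = (fun t => S0 t \/ X t)).
      replace (fun t => S0 t \/ classical_sets.bigcup F (fun X => X) t) with (fun t => exists X, F' X /\ X t).
      * apply Hch.
        -- exists (fun t => S0 t \/ X0 t); exists X0; auto.
        -- intros X [Y [FY ->]]. apply HF. exact FY.
        -- intros X Y [X1 [FX1 ->]] [Y1 [FY1 ->]].
           destruct (Htot X1 Y1 FX1 FY1) as [h|h]; [left|right]; intros t [?|?]; auto.
      * apply set_ext_gen; intro t; split.
        -- intros [X [[X1 [FX1 ->]] [h|h]]]; [left; auto | right; exists X1; auto].
        -- intros [h|[X1 FX1 h]].
           ++ exists (fun t => S0 t \/ X0 t); split; [exists X0; auto| auto].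
           ++ exists (fun t => S0 t \/ X1 t); split; [exists X1; auto| auto].
    + replace (fun t => S0 t \/ classical_sets.bigcup F (fun X => X) t) with S0; auto.
      apply set_ext_gen; intro t; split; [auto|]. intros [h|[X1 FX1 h]]; auto. exfalso; apply Hne; eauto.
  - exists (fun t => S0 t \/ A0 t). split; [exact PA|split; [auto|]].
    intros M' CM' sub t Mt. apply NNPP; intro Hn.
    apply (maxA M').
    + split.
      * intros x hx. apply sub. right. exact hx.
      * intro hM. apply Hn. right. apply hM. exact Mt.
    + replace (fun t => S0 t \/ M' t) with M'; auto.
      apply set_ext_gen; intro x; split; auto. intros [h|h]; auto.
Qed.
Section GenPF.
Variables (T : Type) (mm jj : T -> T -> T) (lee : T -> T -> Prop).
Hypotheses (lee_refl : forall x, lee x x) (lee_trans : forall x y z, lee x y -> lee y z -> lee x z)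
 (mm_l : forall x y, lee (mm x y) x) (mm_r : forall x y, lee (mm x y) y)
 (mm_glb : forall x y z, lee z x -> lee z y -> lee z (mm x y))
 (jj_l : forall x y, lee x (jj x y)) (jj_r : forall x y, lee y (jj x y))
 (jj_lub : forall x y z, lee x z -> lee y z -> lee (jj x y) z)
 (dist : forall x y z, lee (mm z (jj x y)) (jj (mm z x) (mm z y))).
Definition isF (S : T -> Prop) := (forall x y, S x -> lee x y -> S y) /\ (forall x y, S x -> S y -> S (mm x y)).
Definition isI (S : T -> Prop) := (forall x y, S y -> lee x y -> S x) /\ (forall x y, S x -> S y -> S (jj x y)).


Lemma gen_pf (F I : T -> Prop) : isF F -> isI I -> (exists x, F x) -> (forall x, F x -> I x -> False) ->
  exists M, isF M /\ (forall x, F x -> M x) /\ (forall x, M x -> I x -> False) /\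
    (forall x y, M (jj x y) -> M x \/ M y) /\
    (forall y, ~ M y -> exists x i, M x /\ I i /\ lee (mm x y) i).
Proof.
  intros [Fu Fm] [Id Ij] [x0 Fx0] Hd.
  destruct (zorn_gen (fun S => isF S /\ (forall x, S x -> I x -> False)) F) as [M [[[Mu Mm] Md] [FM Mmax]]].
  - split; [split; auto|auto].
  - intros Fam [X0 FX0] HX Htot. split; [split|].
    + intros x y [X [FX Xx]] l. exists X; split; auto. destruct (HX X FX) as [[u _] _]; eauto.
    + intros x y [X [FX Xx]] [Y [FY Yy]].
      destruct (Htot X Y FX FY) as [h|h].
      * exists Y; split; auto. destruct (HX Y FY) as [[_ m] _]; auto.
      * exists X; split; auto. destruct (HX X FX) as [[_ m] _]; auto.
    + intros x [X [FX Xx]] Ix. destruct (HX X FX) as [_ d]; eauto.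
  - assert (Hmax : forall y, ~ M y -> exists x i, M x /\ I i /\ lee (mm x y) i).
    { intros y Hy. apply NNPP; intro Hn.
      set (M' := fun z => exists x, M x /\ lee (mm x y) z).
      assert (HM' : forall t, M' t -> M t).
      { apply Mmax.
        - split; [split|].
          + intros a b [x [Mx l]] l2. exists x; split; eauto.
          + intros a b [x [Mx l]] [x' [Mx' l']]. exists (mm x x'); split; auto.
            apply mm_glb.
            * apply lee_trans with (mm x y); auto. apply mm_glb; eauto.
            * apply lee_trans with (mm x' y); auto. apply mm_glb; eauto.
          + intros a [x [Mx l]] Ia. apply Hn. exists x, a; auto.
        - intros t Mt. exists t; split; auto. }
      apply Hy, HM'. exists x0; split; auto. }
    exists M; split; [split; auto|]. split; [auto|split; [auto|split; [|auto]]].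
    intros x y Mxy. apply NNPP; intro Hn. apply not_or_and in Hn; destruct Hn as [nx ny].
    destruct (Hmax x nx) as [m1 [i1 [M1 [I1 l1]]]].
    destruct (Hmax y ny) as [m2 [i2 [M2 [I2 l2]]]].
    set (m := mm (mm m1 m2) (jj x y)).
    apply (Md m).
    + unfold m; auto.
    + apply Id with (jj i1 i2); [apply Ij; auto|].
      apply lee_trans with (jj (mm m x) (mm m y)).
      * unfold m at 1. apply lee_trans with (mm m (jj x y)); [apply mm_glb; unfold m; auto|apply dist].
      * apply jj_lub.
        -- apply lee_trans with i1; auto. apply lee_trans with (mm m1 x); auto.
           apply mm_glb; auto. unfold m. apply lee_trans with (mm m1 m2); eauto.
        -- apply lee_trans with i2; auto. apply lee_trans with (mm m2 y); auto.
           apply mm_glb; auto. unfold m. apply lee_trans with (mm m1 m2); eauto.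
Qed.
End GenPF.

Section Main.
Variable A : WHBsig.
Hypothesis hA : is_WHB A.
Local Notation m := (wmeet A).
Local Notation j := (wjoin A).
Local Notation im := (wimp A).
Local Notation ci := (wcoimp A).
Local Notation z0 := (wzero A).
Local Notation o1 := (wone A).
Local Notation le := (wle A).

Ltac dh := destruct hA as [[? [? [? [? [? [? [? [? ?]]]]]]]] [? [? [? [? [? [? [? [? [? ?]]]]]]]]]]; auto.

Lemma mA : forall a b c, m a (m b c) = m (m a b) c. Proof. dh. Qed.
Lemma jA : forall a b c, j a (j b c) = j (j a b) c. Proof. dh. Qed.
Lemma mC : forall a b, m a b = m b a. Proof. dh. Qed.
Lemma jC : forall a b, j a b = j b a. Proof. dh. Qed.
Lemma ab1 : forall a b, m a (j a b) = a. Proof. dh. Qed.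
Lemma ab2 : forall a b, j a (m a b) = a. Proof. dh. Qed.
Lemma dst : forall a b c, m a (j b c) = j (m a b) (m a c). Proof. dh. Qed.
Lemma m0 : forall a, m a z0 = z0. Proof. dh. Qed.
Lemma j1 : forall a, j a o1 = o1. Proof. dh. Qed.
Lemma iref : forall a, im a a = o1. Proof. dh. Qed.
Lemma imr : forall a b c, im a (m b c) = m (im a b) (im a c). Proof. dh. Qed.
Lemma ijl : forall a b c, im (j a b) c = m (im a c) (im b c). Proof. dh. Qed.
Lemma itr : forall a b c, le (m (im a b) (im b c)) (im a c). Proof. dh. Qed.
Lemma cref : forall a, ci a a = z0. Proof. dh. Qed.
Lemma cjl : forall a b c, ci (j a b) c = j (ci a c) (ci b c). Proof. dh. Qed.
Lemma cmr : forall a b c, ci a (m b c) = j (ci a b) (ci a c). Proof. dh. Qed.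
Lemma ctr : forall a b c, le (ci a c) (j (ci a b) (ci b c)). Proof. dh. Qed.

Lemma mI : forall a, m a a = a.
Proof. intro a. rewrite <- (ab2 a a) at 2. apply ab1. Qed.
Lemma jI : forall a, j a a = a.
Proof. intro a. rewrite <- (ab1 a a) at 2. apply ab2. Qed.
Lemma m1 : forall a, m a o1 = a.
Proof. intro a. rewrite <- (j1 a). apply ab1. Qed.
Lemma j0 : forall a, j a z0 = a.
Proof. intro a. rewrite <- (m0 a). apply ab2. Qed.
Lemma leE : forall a b, le a b <-> j a b = b.
Proof.
  intros a b; unfold wle; split; intro H.
  - rewrite <- H. rewrite jC, mC. apply ab2.
  - rewrite <- H. apply ab1.
Qed.
Lemma le_refl : forall a, le a a. Proof. intro; apply mI. Qed.
Lemma le_trans : forall a b c, le a b -> le b c -> le a c.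
Proof. unfold wle; intros a b c H1 H2. rewrite <- H1, <- mA, H2. reflexivity. Qed.
Lemma le_antisym : forall a b, le a b -> le b a -> a = b.
Proof. unfold wle; intros a b H1 H2. rewrite <- H1, mC; auto. Qed.
Lemma le_ml : forall a b, le (m a b) a.
Proof. unfold wle; intros. rewrite (mC (m a b)), mA, mI; auto. Qed.
Lemma le_mr : forall a b, le (m a b) b.
Proof. unfold wle; intros. rewrite <- mA, mI; auto. Qed.
Lemma le_glb : forall a b c, le c a -> le c b -> le c (m a b).
Proof. unfold wle; intros a b c H1 H2. rewrite mA, H1, H2; auto. Qed.
Lemma le_jl : forall a b, le a (j a b).
Proof. intros; apply ab1. Qed.
Lemma le_jr : forall a b, le b (j a b).
Proof. intros; rewrite jC; apply ab1. Qed.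
Lemma le_lub : forall a b c, le a c -> le b c -> le (j a b) c.
Proof. intros a b c H1 H2. apply leE in H1; apply leE in H2; apply leE. rewrite <- jA, H2; auto. Qed.
Lemma le_0 : forall a, le z0 a.
Proof. unfold wle; intros; rewrite mC; apply m0. Qed.
Lemma le_1 : forall a, le a o1.
Proof. unfold wle; intros; apply m1. Qed.
Lemma dst2 : forall a b c, j a (m b c) = m (j a b) (j a c).
Proof.
  intros a b c. rewrite dst. rewrite (mC (j a b) a), ab1.
  rewrite (mC (j a b) c), dst. rewrite jA. rewrite (mC c a), ab2. rewrite (mC c b). reflexivity.
Qed.
Lemma m_mono : forall a b c d, le a b -> le c d -> le (m a c) (m b d).
Proof.
  intros. apply le_glb; [apply le_trans with a|apply le_trans with c]; auto using le_ml, le_mr.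
Qed.
Lemma j_mono : forall a b c d, le a b -> le c d -> le (j a c) (j b d).
Proof.
  intros. apply le_lub; [apply le_trans with b|apply le_trans with d]; auto using le_jl, le_jr.
Qed.
Lemma le_1_eq : forall x, le o1 x -> x = o1.
Proof. unfold wle; intros x H. rewrite <- H, mC. symmetry; apply m1. Qed.
Lemma le_0_eq : forall x, le x z0 -> x = z0.
Proof. unfold wle; intros x H. rewrite <- H. apply m0. Qed.
Lemma le_eq : forall a b, a = b -> le a b.
Proof. intros a b ->; apply le_refl. Qed.

Lemma i_mono2 : forall a b c, le b c -> le (im a b) (im a c).
Proof. unfold wle; intros a b c H. rewrite <- imr, H; auto. Qed.
Lemma i_anti1 : forall a b c, le a b -> le (im b c) (im a c).
Proof. intros a b c H. apply leE in H. unfold wle. rewrite mC, <- ijl, H; auto. Qed.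
Lemma c_mono1 : forall a b x, le a b -> le (ci a x) (ci b x).
Proof. intros a b x H. apply leE in H. apply leE. rewrite <- cjl, H; auto. Qed.
Lemma c_anti2 : forall a b x, le a b -> le (ci x b) (ci x a).
Proof. unfold wle; intros a b x H. apply leE. rewrite jC, <- cmr, H; auto. Qed.
Lemma i_1 : forall a, im a o1 = o1.
Proof. intro a. apply le_1_eq. apply le_trans with (im a a); [rewrite iref; apply le_refl|apply i_mono2, le_1]. Qed.
Lemma c_0l : forall a, ci z0 a = z0.
Proof. intro a. apply le_0_eq. apply le_trans with (ci a a); [apply c_mono1, le_0|rewrite cref; apply le_refl]. Qed.

Section PF.
Variable P : A -> Prop.
Hypothesis hP : prime_filter A P.
Lemma pf1 : P o1. Proof. apply hP. Qed.
Lemma pf0 : ~ P z0. Proof. apply hP. Qed.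
Lemma pfm : forall a b, P a -> P b -> P (m a b). Proof. apply hP. Qed.
Lemma pfu : forall a b, P a -> le a b -> P b. Proof. apply hP. Qed.
Lemma pfj : forall a b, P (j a b) -> P a \/ P b. Proof. apply hP. Qed.
Lemma pf_m_iff : forall a b, P (m a b) <-> P a /\ P b.
Proof. intros; split; [intro H; split; eapply pfu; eauto using le_ml, le_mr|intros [? ?]; apply pfm; auto]. Qed.
Lemma pf_j_iff : forall a b, P (j a b) <-> P a \/ P b.
Proof. intros; split; [apply pfj|intros [?|?]; eapply pfu; eauto using le_jl, le_jr]. Qed.
End PF.


Definition gen_E := gen_pf A m j le le_refl le_trans le_ml le_mr le_glb le_jl le_jr le_lub
  (fun x y z => le_eq _ _ (dst z x y)).
Definition gen_D := gen_pf A j m (fun x y => le y x) le_refl (fun x y z h1 h2 => le_trans z y x h2 h1)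
  le_jl le_jr le_lub le_ml le_mr le_glb (fun x y z => le_eq _ _ (eq_sym (dst2 z x y))).

Lemma R_exists (P : XA A) a b : ~ proj1_sig P (im a b) ->
  exists Q : XA A, RA A P Q /\ proj1_sig Q a /\ ~ proj1_sig Q b.
Proof.
  destruct P as [P hP]; simpl; intro Hab.
  destruct (gen_D (fun x => le x b) (fun z => P (im a z))) as [M [[Md Mj] [FM [Mdisj [Mprime Mmax]]]]].
  - split.
    + intros x y Hx Hl. apply le_trans with x; auto.
    + intros x y Hx Hy. apply le_lub; auto.
  - split.
    + intros x y Hy Hl. eapply pfu; eauto. apply i_mono2; auto.
    + intros x y Hx Hy. rewrite imr. apply pfm; auto.
  - exists b; apply le_refl.
  - intros x Hx Hi. apply Hab. eapply pfu; eauto. apply i_mono2; auto.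
  - assert (M1 : ~ M o1). { intro H. apply (Mdisj o1); auto. rewrite i_1. apply (pf1 _ hP). }
    assert (Mb : M b) by (apply FM; apply le_refl).
    assert (M0 : M z0) by (apply Md with b; auto; apply le_0).
    assert (pfQ : prime_filter A (fun z => ~ M z)).
    { split; [auto|split; [auto|split; [|split]]].
      - intros x y Hx Hy Hxy. destruct (Mprime x y Hxy); auto.
      - intros x y Hx Hl My. apply Hx. apply Md with y; auto.
      - intros x y Hxy. apply NNPP; intro Hn. apply not_or_and in Hn. destruct Hn as [h1 h2].
        apply Hxy. apply Mj; apply NNPP; auto. }
    exists (exist _ _ pfQ); simpl. split; [|split].
    + intros x y Hxy Hx My. simpl in *.
      destruct (Mmax x Hx) as [jx [i0 [Mjx [Ii0 Hl]]]].
      assert (H1 : P (im a (j jx x))) by (eapply pfu; eauto; apply i_mono2; auto).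
      assert (H2 : P (im (j jx x) (j jx y))).
      { apply (pfu _ hP (im x y)); auto. rewrite ijl. apply le_glb.
        - replace (im jx (j jx y)) with o1; [apply le_1|].
          symmetry; apply le_1_eq. rewrite <- (iref jx). apply i_mono2, le_jl.
        - apply i_mono2, le_jr. }
      apply (Mdisj (j jx y)); [apply Mj; auto|].
      apply (pfu _ hP (m (im a (j jx x)) (im (j jx x) (j jx y)))); [apply (pfm _ hP); auto|apply itr].
    + intro Ma. apply (Mdisj a Ma). rewrite iref. apply (pf1 _ hP).
    + auto.
Qed.

Lemma S_exists (P : XA A) a b : proj1_sig P (ci a b) ->
  exists Q : XA A, SA A P Q /\ proj1_sig Q a /\ ~ proj1_sig Q b.
Proof.
  destruct P as [P hP]; simpl; intro Hab.
  destruct (gen_E (fun x => le a x) (fun z => ~ P (ci z b))) as [M [[Mu Mm] [FM [Mdisj [Mprime Mmax]]]]].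
  - split.
    + intros x y Hx Hl. apply le_trans with x; auto.
    + intros x y Hx Hy. apply le_glb; auto.
  - split.
    + intros x y Hy Hl H. apply Hy. eapply pfu; eauto. apply c_mono1; auto.
    + intros x y Hx Hy H. rewrite cjl in H. destruct (pfj _ hP _ _ H); auto.
  - exists a; apply le_refl.
  - intros x Hx Hi. apply Hi. eapply pfu; eauto. apply c_mono1; auto.
  - assert (pfQ : prime_filter A M).
    { split; [|split; [|split; [|split]]].
      - apply Mu with a; [apply FM, le_refl|apply le_1].
      - intro H. apply (Mdisj z0 H). rewrite c_0l. apply (pf0 _ hP).
      - exact Mm.
      - exact Mu.
      - exact Mprime. }
    exists (exist _ _ pfQ); simpl. split; [|split].
    + intros x y Mx My. apply NNPP; intro Hn.
      destruct (Mmax y My) as [mx [i0 [Mmx [Ii0 Hl]]]].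
      assert (Hy : ~ P (ci (m mx y) b)).
      { intro H; apply Ii0. eapply pfu; eauto. apply c_mono1; auto. }
      apply (Mdisj (m mx x)); [apply Mm; auto|].
      intro H. eapply pfu in H; [|exact hP|apply ctr with (b := m mx y)].
      apply (pfj _ hP) in H. destruct H as [H|H]; [|auto].
      rewrite cmr in H. apply (pfj _ hP) in H. destruct H as [H|H].
      * apply (pf0 _ hP). rewrite <- (cref mx). eapply pfu; eauto. apply c_mono1, le_ml.
      * apply Hn. eapply pfu; eauto. apply c_mono1, le_mr.
    + apply FM, le_refl.
    + intro Mb. apply (Mdisj b Mb). rewrite cref. apply (pf0 _ hP).
Qed.

Lemma sig_imp (P : XA A) a b : proj1_sig P (im a b) <->
  forall Q : XA A, RA A P Q -> proj1_sig Q a -> proj1_sig Q b.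
Proof.
  split.
  - intros H Q HR. apply HR; auto.
  - intro H. apply NNPP; intro Hn. destruct (R_exists P a b Hn) as [Q [HR [Qa Qb]]]. eauto.
Qed.

Lemma sig_coimp (P : XA A) a b : proj1_sig P (ci a b) <->
  exists Q : XA A, SA A P Q /\ proj1_sig Q a /\ ~ proj1_sig Q b.
Proof.
  split.
  - apply S_exists.
  - intros [Q [HS [Qa Qb]]]. apply HS; auto.
Qed.

Section Theta.
Variable th : A -> A -> Prop.
Hypothesis hth : WHB_congruence A th.
Lemma thR : forall a, th a a. Proof. apply hth. Qed.
Lemma thS : forall a b, th a b -> th b a. Proof. apply hth. Qed.
Lemma thT : forall a b c, th a b -> th b c -> th a c. Proof. apply hth. Qed.
Lemma thM : forall a b c d, th a b -> th c d -> th (m a c) (m b d). Proof. apply hth. Qed.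
Lemma thJ : forall a b c d, th a b -> th c d -> th (j a c) (j b d). Proof. apply hth. Qed.
Lemma thI : forall a b c d, th a b -> th c d -> th (im a c) (im b d). Proof. apply hth. Qed.
Lemma thC : forall a b c d, th a b -> th c d -> th (ci a c) (ci b d). Proof. apply hth. Qed.

Definition lt x y := th (m x y) x.
Lemma le_lt : forall x y, le x y -> lt x y.
Proof. unfold lt, wle; intros x y H; rewrite H; apply thR. Qed.
Lemma lt_refl : forall x, lt x x. Proof. intros; apply le_lt, le_refl. Qed.
Lemma lt_trans : forall x y z, lt x y -> lt y z -> lt x z.
Proof.
  unfold lt; intros x y z H1 H2.
  apply thT with (m (m x y) z); [apply thM; [apply thS; auto|apply thR]|].
  rewrite <- mA. apply thT with (m x y); auto. apply thM; auto. apply thR.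
Qed.
Lemma lt_glb : forall x y z, lt z x -> lt z y -> lt z (m x y).
Proof.
  unfold lt; intros x y z H1 H2. rewrite mA.
  apply thT with (m z y); auto. apply thM; auto. apply thR.
Qed.
Lemma lt_lub : forall x y z, lt x z -> lt y z -> lt (j x y) z.
Proof.
  unfold lt; intros x y z H1 H2. rewrite mC, dst, (mC z x), (mC z y). apply thJ; auto.
Qed.
Definition gen_T := gen_pf A m j lt lt_refl lt_trans (fun x y => le_lt _ _ (le_ml x y))
  (fun x y => le_lt _ _ (le_mr x y)) lt_glb (fun x y => le_lt _ _ (le_jl x y))
  (fun x y => le_lt _ _ (le_jr x y)) lt_lub (fun x y z => le_lt _ _ (le_eq _ _ (dst z x y))).

Lemma th_sep1 a b : ~ th a (m a b) -> exists Q : XA A,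
  (forall c d, th c d -> (proj1_sig Q c <-> proj1_sig Q d)) /\ proj1_sig Q a /\ ~ proj1_sig Q b.
Proof.
  intro Hab.
  destruct (gen_T (fun x => lt a x) (fun x => lt x (m a b))) as [M [[Mu Mm] [FM [Mdisj [Mprime Mmax]]]]].
  - split.
    + intros x y Hx Hl. apply lt_trans with x; auto.
    + intros x y Hx Hy. apply lt_glb; auto.
  - split.
    + intros x y Hy Hl. apply lt_trans with y; auto.
    + intros x y Hx Hy. apply lt_lub; auto.
  - exists a; apply lt_refl.
  - intros x Hx Hi. apply Hab. assert (H := lt_trans _ _ _ Hx Hi). unfold lt in H.
    rewrite mA, mI in H. apply thS; auto.
  - assert (Mle : forall x y, M x -> le x y -> M y) by (intros; eapply Mu; eauto; apply le_lt; auto).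
    assert (Msat : forall c d, th c d -> M c -> M d).
    { intros c d H Mc. apply Mu with c; auto. unfold lt.
      rewrite <- (mI c) at 2. apply thM; [apply thR|apply thS; auto]. }
    assert (pfQ : prime_filter A M).
    { split; [|split; [|split; [|split]]].
      - apply Mle with a; [apply FM, lt_refl|apply le_1].
      - intro H. apply (Mdisj z0 H). apply le_lt, le_0.
      - exact Mm.
      - exact Mle.
      - exact Mprime. }
    exists (exist _ _ pfQ); simpl. split; [|split].
    + intros c d H; split; apply Msat; auto. apply thS; auto.
    + apply FM, lt_refl.
    + intro Mb. apply (Mdisj (m a b)); [apply Mm; auto; apply FM, lt_refl|apply lt_refl].
Qed.

Lemma th_sep a b : ~ th a b -> exists Q : XA A,
  (forall c d, th c d -> (proj1_sig Q c <-> proj1_sig Q d)) /\ ~ (proj1_sig Q a <-> proj1_sig Q b).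
Proof.
  intro Hab. destruct (classic (th a (m a b))) as [H|H].
  - assert (H' : ~ th b (m b a)).
    { intro H'. apply Hab. apply thT with (m a b); auto. rewrite mC. apply thS; auto. }
    destruct (th_sep1 b a H') as [Q [HQ [Qb Qa]]]. exists Q; split; auto. intros [h1 h2]; auto.
  - destruct (th_sep1 a b H) as [Q [HQ [Qa Qb]]]. exists Q; split; auto. intros [h1 h2]; auto.
Qed.
End Theta.


Definition sat (Q : XA A) (p : A * A) := proj1_sig Q (fst p) -> proj1_sig Q (snd p).
Definition FIP (K : A * A -> Prop) := forall L : list (A * A), (forall p, In p L -> K p) ->
  exists Q : XA A, forall p, In p L -> sat Q p.

Lemma notFIP K : ~ FIP K -> exists L, (forall p, In p L -> K p) /\ forall Q, ~ (forall p, In p L -> sat Q p).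
Proof.
  intro H. apply NNPP; intro H0. apply H. intros L HL. apply NNPP; intro Hn. apply H0.
  exists L; split; auto. intros Q HQ. apply Hn; eauto.
Qed.

Lemma compact (C : A * A -> Prop) : FIP C -> exists Q : XA A, forall p, C p -> sat Q p.
Proof.
  intro HC.
  destruct (zorn_gen FIP C HC) as [K [FK [CK Kmax]]].
  { intros Fam [X0 FX0] HX Htot L HL.
    assert (Hs : exists X, Fam X /\ forall p, In p L -> X p).
    { clear HX. induction L as [|q L IH].
      - exists X0; split; auto. intros p [].
      - destruct IH as [X [FX HXL]]. { intros p Hp; apply HL; right; auto. }
        destruct (HL q (or_introl eq_refl)) as [Y [FY Yq]].
        destruct (Htot X Y FX FY) as [h|h].
        + exists Y; split; auto. intros p [<-|Hp]; auto.
        + exists X; split; auto. intros p [<-|Hp]; auto. }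
    destruct Hs as [X [FX HXL]]. apply (HX X FX L HXL). }
  assert (Kadd : forall p, FIP (fun q => K q \/ q = p) -> K p).
  { intros p H. apply (Kmax _ H); auto. }
  assert (Ksplit : forall p L, (forall q, In q L -> K q \/ q = p) -> exists L',
     (forall q, In q L' -> K q) /\ forall Q, (forall q, In q L' -> sat Q q) -> sat Q p ->
       forall q, In q L -> sat Q q).
  { intros p L. induction L as [|q L IH]; intro HL.
    - exists nil; split; [intros q []|intros Q _ _ q []].
    - destruct IH as [L' [H1 H2]]. { intros; apply HL; right; auto. }
      destruct (HL q (or_introl eq_refl)) as [Kq|Heq]; [|subst q].
      + exists (q :: L'); split.
        * intros r [<-|Hr]; auto.
        * intros Q HQ Hp r [<-|Hr]; [apply HQ; left; auto|apply H2; auto; intros; apply HQ; right; auto].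
      + exists L'; split; auto. intros Q HQ Hp r [<-|Hr]; auto. }
  assert (unsat : forall L, (forall q, In q L -> K q) -> (forall Q : XA A, (forall q, In q L -> sat Q q) -> False) -> False).
  { intros L HL H. destruct (FK L HL) as [Q HQ]. eauto. }
  assert (dich : forall a, K (wone A, a) \/ K (a, wzero A)).
  { intro a. apply NNPP; intro Hn. apply not_or_and in Hn. destruct Hn as [n1 n2].
    assert (f1 : ~ FIP (fun q => K q \/ q = (wone A, a))) by (intro H; apply n1, Kadd; auto).
    assert (f2 : ~ FIP (fun q => K q \/ q = (a, wzero A))) by (intro H; apply n2, Kadd; auto).
    apply notFIP in f1. apply notFIP in f2.
    destruct f1 as [L1 [HL1 N1]]. destruct f2 as [L2 [HL2 N2]].
    destruct (Ksplit _ _ HL1) as [L1' [K1 S1]]. destruct (Ksplit _ _ HL2) as [L2' [K2 S2]].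
    apply (unsat (L1' ++ L2')).
    - intros q Hq. apply in_app_or in Hq. destruct Hq; auto.
    - intros Q HQ. destruct (classic (proj1_sig Q a)) as [Qa|Qa].
      + apply (N1 Q). apply S1; [intros; apply HQ; apply in_or_app; auto|]. intros _; exact Qa.
      + apply (N2 Q). apply S2; [intros; apply HQ; apply in_or_app; auto|]. intro h; contradiction. }
  set (Q0 := fun a => K (wone A, a)).
  assert (pfQ0 : prime_filter A Q0).
  { unfold Q0; split; [|split; [|split; [|split]]].
    - destruct (dich (wone A)) as [h|h]; auto. exfalso.
      apply (unsat [(wone A, wzero A)]); [intros q [<-|[]]; auto|].
      intros Q HQ. apply (pf0 _ (proj2_sig Q)). apply (HQ _ (or_introl eq_refl)). apply (pf1 _ (proj2_sig Q)).
    - intro h. apply (unsat [(wone A, wzero A)]); [intros q [<-|[]]; auto|].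
      intros Q HQ. apply (pf0 _ (proj2_sig Q)). apply (HQ _ (or_introl eq_refl)). apply (pf1 _ (proj2_sig Q)).
    - intros a b Ha Hb. destruct (dich (m a b)) as [h|h]; auto. exfalso.
      apply (unsat [(wone A, a); (wone A, b); (m a b, wzero A)]); [intros q [<-|[<-|[<-|[]]]]; auto|].
      intros Q HQ. pose proof (proj2_sig Q) as hQ. unfold sat in HQ; simpl in HQ.
      apply (pf0 _ hQ). apply (HQ _ (or_intror (or_intror (or_introl eq_refl)))).
      apply (pfm _ hQ); [apply (HQ _ (or_introl eq_refl))|apply (HQ _ (or_intror (or_introl eq_refl)))]; apply (pf1 _ hQ).
    - intros a b Ha Hab. destruct (dich b) as [h|h]; auto. exfalso.
      apply (unsat [(wone A, a); (b, wzero A)]); [intros q [<-|[<-|[]]]; auto|].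
      intros Q HQ. pose proof (proj2_sig Q) as hQ. unfold sat in HQ; simpl in HQ.
      apply (pf0 _ hQ). apply (HQ _ (or_intror (or_introl eq_refl))).
      apply (pfu _ hQ a); auto. apply (HQ _ (or_introl eq_refl)). apply (pf1 _ hQ).
    - intros a b Hab. apply NNPP; intro Hn. apply not_or_and in Hn. destruct Hn as [na nb].
      destruct (dich a) as [h1|h1]; [contradiction|]. destruct (dich b) as [h2|h2]; [contradiction|].
      apply (unsat [(wone A, j a b); (a, wzero A); (b, wzero A)]); [intros q [<-|[<-|[<-|[]]]]; auto|].
      intros Q HQ. pose proof (proj2_sig Q) as hQ. unfold sat in HQ; simpl in HQ.
      assert (H := HQ _ (or_introl eq_refl) (pf1 _ hQ)). apply (pfj _ hQ) in H.
      apply (pf0 _ hQ). destruct H as [H|H];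
      [apply (HQ _ (or_intror (or_introl eq_refl)))|apply (HQ _ (or_intror (or_intror (or_introl eq_refl))))]; auto. }
  exists (exist _ Q0 pfQ0). intros [c d] Cp. unfold sat; simpl. unfold Q0. intro Kc.
  destruct (dich d) as [h|h]; auto. exfalso.
  apply (unsat [(wone A, c); (c, d); (d, wzero A)]); [intros q [<-|[<-|[<-|[]]]]; auto|].
  intros Q HQ. pose proof (proj2_sig Q) as hQ. unfold sat in HQ; simpl in HQ.
  apply (pf0 _ hQ). apply (HQ _ (or_intror (or_intror (or_introl eq_refl)))).
  apply (HQ _ (or_intror (or_introl eq_refl))). apply (HQ _ (or_introl eq_refl)). apply (pf1 _ hQ).
Qed.

Lemma cover (C : A -> A -> Prop) :
  (forall Q : XA A, exists c d, C c d /\ proj1_sig Q c /\ ~ proj1_sig Q d) ->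
  exists L : list (A * A), (forall p, In p L -> C (fst p) (snd p)) /\
    forall Q : XA A, exists p, In p L /\ proj1_sig Q (fst p) /\ ~ proj1_sig Q (snd p).
Proof.
  intro H. apply NNPP; intro Hn.
  destruct (compact (fun p => C (fst p) (snd p))) as [Q HQ].
  - intros L HL. apply NNPP; intro Hn2. apply Hn. exists L; split; auto. intro Q.
    apply NNPP; intro Hn3. apply Hn2. exists Q. intros p Hp Hc. apply NNPP; intro Hd.
    apply Hn3. exists p; auto.
  - destruct (H Q) as [c [d [Ccd [Qc Qd]]]]. apply Qd. apply (HQ (c, d)); auto.
Qed.


Lemma collapse (l : list (bool * A)) : exists c d, forall Q : XA A,
  (forall s, In s l -> subbasic A s Q) <-> (proj1_sig Q c /\ ~ proj1_sig Q d).
Proof.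
  induction l as [|[b a] l IH].
  - exists o1, z0. intro Q. pose proof (proj2_sig Q) as hQ. split.
    + intros _. split; [apply (pf1 _ hQ)|apply (pf0 _ hQ)].
    + intros _ s [].
  - destruct IH as [c [d H]]. destruct b.
    + exists (m a c), d. intro Q. pose proof (proj2_sig Q) as hQ.
      rewrite (pf_m_iff _ hQ). split.
      * intro h. assert (h' : forall s, In s l -> subbasic A s Q) by (intros; apply h; right; auto).
        apply H in h'. destruct h' as [h1 h2]. split; [split|]; auto.
        apply (h _ (or_introl eq_refl)).
      * intros [[h1 h2] h3] s [Hs|Hs]; [subst s; simpl; auto|].
        apply (proj2 (H Q)); auto.
    + exists c, (j a d). intro Q. pose proof (proj2_sig Q) as hQ.
      rewrite (pf_j_iff _ hQ). split.
      * intro h. assert (h' : forall s, In s l -> subbasic A s Q) by (intros; apply h; right; auto).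
        apply H in h'. destruct h' as [h1 h2]. split; auto. intros [h3|h3]; auto.
        apply (h _ (or_introl eq_refl)). exact h3.
      * intros [h1 h2] s [Hs|Hs].
        -- subst s. unfold subbasic, sigmaA; simpl. intro; apply h2; auto.
        -- apply H; auto.
Qed.

Definition full : XA A -> Prop := fun _ => True.

Lemma open_ext U V : (forall Q, U Q <-> V Q) -> tau_open A U -> tau_open A V.
Proof.
  intros H HU P VP. destruct (HU P (proj2 (H P) VP)) as [l [h1 h2]].
  exists l; split; auto. intros; apply H; auto.
Qed.
Lemma clopen_ext U V : (forall Q, U Q <-> V Q) -> tau_clopen A U -> tau_clopen A V.
Proof.
  intros H [h1 h2]. split; [eapply open_ext; eauto|].
  eapply open_ext; [|exact h2]. intro Q; specialize (H Q); simpl; tauto.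
Qed.
Lemma open_meet U V : tau_open A U -> tau_open A V -> tau_open A (Tmeet A U V).
Proof.
  intros HU HV P [UP VP]. destruct (HU P UP) as [l1 [a1 b1]]. destruct (HV P VP) as [l2 [a2 b2]].
  exists (l1 ++ l2); split.
  - intros s Hs; apply in_app_or in Hs; destruct Hs; auto.
  - intros Q HQ; split; [apply b1|apply b2]; intros; apply HQ; apply in_or_app; auto.
Qed.
Lemma open_join U V : tau_open A U -> tau_open A V -> tau_open A (Tjoin A U V).
Proof.
  intros HU HV P [UP|VP].
  - destruct (HU P UP) as [l [a b]]. exists l; split; auto. intros; left; auto.
  - destruct (HV P VP) as [l [a b]]. exists l; split; auto. intros; right; auto.
Qed.
Lemma clopen_compl U : tau_clopen A U -> tau_clopen A (Tcompl A U).
Proof.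
  intros [h1 h2]. split; [exact h2|]. eapply open_ext; [|exact h1].
  intro Q. unfold Tcompl. split; [intros h h'; auto|apply NNPP].
Qed.
Lemma clopen_meet U V : tau_clopen A U -> tau_clopen A V -> tau_clopen A (Tmeet A U V).
Proof.
  intros [a1 b1] [a2 b2]. split; [apply open_meet; auto|].
  eapply open_ext; [|apply (open_join _ _ b1 b2)].
  intro Q; unfold Tjoin, Tmeet; split; [tauto|]. intro h. apply NNPP; intro h'. apply h.
  split; apply NNPP; intro; apply h'; auto.
Qed.
Lemma clopen_join U V : tau_clopen A U -> tau_clopen A V -> tau_clopen A (Tjoin A U V).
Proof.
  intros [a1 b1] [a2 b2]. split; [apply open_join; auto|].
  eapply open_ext; [|apply (open_meet _ _ b1 b2)].
  intro Q; unfold Tjoin, Tmeet; tauto.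
Qed.
Lemma clopen_sig a : tau_clopen A (sigmaA A a).
Proof.
  split.
  - intros P HP. exists [(true, a)]. split.
    + intros s [<-|[]]; simpl; auto.
    + intros Q HQ. apply (HQ (true, a)); left; auto.
  - intros P HP. exists [(false, a)]. split.
    + intros s [<-|[]]; simpl; auto.
    + intros Q HQ. apply (HQ (false, a)); left; auto.
Qed.
Lemma clopen_full : tau_clopen A full.
Proof.
  split.
  - intros P _. exists nil. split; [intros s []|intros; exact I].
  - intros P HP. exfalso; apply HP; exact I.
Qed.
Lemma clopen_list {X} (K : list X) (Phi : X -> XA A -> Prop) :
  (forall p, tau_clopen A (Phi p)) -> tau_clopen A (fun Q => forall p, In p K -> Phi p Q).
Proof.
  intro H. induction K as [|p K IH].
  - eapply clopen_ext; [|exact clopen_full]. intro Q; split; [intros _ p []|intros; exact I].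
  - eapply clopen_ext; [|exact (clopen_meet _ _ (H p) IH)].
    intro Q; unfold Tmeet; split.
    + intros [h1 h2] q [<-|Hq]; auto.
    + intro h; split; [apply h; left; auto|intros; apply h; right; auto].
Qed.

Definition cnf (K : list (A * A)) : XA A -> Prop :=
  fun Q => forall p, In p K -> proj1_sig Q (fst p) -> proj1_sig Q (snd p).

Lemma clopen_cnf K : tau_clopen A (cnf K).
Proof.
  apply clopen_list. intros [c d].
  eapply clopen_ext; [|exact (clopen_join _ _ (clopen_compl _ (clopen_sig c)) (clopen_sig d))].
  intro Q; unfold Tjoin, Tcompl, sigmaA; simpl. split; [tauto|].
  intro h. destruct (classic (proj1_sig Q c)); auto.
Qed.

Lemma clopen_is_cnf U : tau_clopen A U -> exists K, forall Q, U Q <-> cnf K Q.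
Proof.
  intros [HU HnU].
  destruct (cover (fun c d => (forall Q : XA A, proj1_sig Q c /\ ~ proj1_sig Q d -> U Q) \/
                              (forall Q : XA A, proj1_sig Q c /\ ~ proj1_sig Q d -> ~ U Q)))
    as [L [HL HC]].
  - intro Q. destruct (classic (U Q)) as [h|h].
    + destruct (HU Q h) as [l [h1 h2]]. destruct (collapse l) as [c [d Hcd]].
      exists c, d. split; [left; intros Q' bx; apply h2; apply Hcd; auto|apply Hcd; auto].
    + destruct (HnU Q h) as [l [h1 h2]]. destruct (collapse l) as [c [d Hcd]].
      exists c, d. split; [right; intros Q' bx; apply h2; apply Hcd; auto|apply Hcd; auto].
  - assert (HK : exists K, (forall p, In p K -> forall Q : XA A, proj1_sig Q (fst p) /\ ~ proj1_sig Q (snd p) -> ~ U Q) /\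
        forall p, In p L -> (forall Q : XA A, proj1_sig Q (fst p) /\ ~ proj1_sig Q (snd p) -> U Q) \/ In p K).
    { clear HC. induction L as [|p L IH].
      - exists nil; split; [intros p []|intros p []].
      - destruct IH as [K [K1 K2]]. { intros; apply HL; right; auto. }
        destruct (HL p (or_introl eq_refl)) as [h|h].
        + exists K; split; auto. intros q [Hq|Hq]; [subst q; left; auto|auto].
        + exists (p :: K); split.
          * intros q [Hq|Hq]; [subst q; auto|apply K1; auto].
          * intros q [Hq|Hq]; [subst q; right; left; auto|].
            destruct (K2 q Hq); [left|right; right]; auto. }
    destruct HK as [K [K1 K2]]. exists K. intro Q. unfold cnf. split.
    + intros UQ p Hp Hc. apply NNPP; intro Hd. apply (K1 p Hp Q); auto.
    + intro H. apply NNPP; intro nU. destruct (HC Q) as [p [Hp [Hc Hd]]].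
      destruct (K2 p Hp) as [h|h]; [apply nU; apply h; auto|]. apply Hd; apply H; auto.
Qed.

Lemma GA_cnf K Q' : GA A (cnf K) Q' <-> forall p, In p K -> proj1_sig Q' (im (fst p) (snd p)).
Proof.
  unfold GA, cnf. split.
  - intros H p Hp. apply sig_imp. intros Q HR. apply H; auto.
  - intros H Q HR p Hp. apply (proj1 (sig_imp Q' (fst p) (snd p)) (H p Hp)); auto.
Qed.
Lemma HA_cnf K Q' : HA A (cnf K) Q' <-> forall p, In p K -> ~ proj1_sig Q' (ci (fst p) (snd p)).
Proof.
  unfold HA, cnf. split.
  - intros H p Hp Hc. apply sig_coimp in Hc. destruct Hc as [Q [HS [h1 h2]]].
    apply h2. apply (H Q HS p Hp h1).
  - intros H Q HS p Hp Hc. apply NNPP; intro Hd. apply (H p Hp). apply sig_coimp. exists Q; auto.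
Qed.

Lemma clopen_GA U : tau_clopen A U -> tau_clopen A (GA A U).
Proof.
  intro hU. destruct (clopen_is_cnf U hU) as [K HK].
  eapply clopen_ext; [|exact (clopen_list K (fun p => sigmaA A (im (fst p) (snd p))) (fun p => clopen_sig _))].
  intro Q'. transitivity (GA A (cnf K) Q'); [rewrite GA_cnf; unfold sigmaA; tauto|].
  unfold GA. split; intros H Q HR; apply HK; auto.
Qed.
Lemma clopen_HA U : tau_clopen A U -> tau_clopen A (HA A U).
Proof.
  intro hU. destruct (clopen_is_cnf U hU) as [K HK].
  eapply clopen_ext; [|exact (clopen_list K (fun p => Tcompl A (sigmaA A (ci (fst p) (snd p)))) (fun p => clopen_compl _ (clopen_sig _)))].
  intro Q'. transitivity (HA A (cnf K) Q'); [rewrite HA_cnf; unfold Tcompl, sigmaA; tauto|].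
  unfold HA. split; intros H Q HR; apply HK; auto.
Qed.


Definition fT (th : A -> A -> Prop) : (XA A -> Prop) -> (XA A -> Prop) -> Prop :=
  fun U V => tau_clopen A U /\ tau_clopen A V /\
    exists l : list (A * A), (forall p, In p l -> th (fst p) (snd p)) /\
      forall Q : XA A, (forall p, In p l -> (proj1_sig Q (fst p) <-> proj1_sig Q (snd p))) -> (U Q <-> V Q).
Definition gT (ps : (XA A -> Prop) -> (XA A -> Prop) -> Prop) : A -> A -> Prop :=
  fun a b => ps (sigmaA A a) (sigmaA A b).

Lemma f_TBA th : WHB_congruence A th -> TBA_congruence A (fT th).
Proof.
  intro hth. unfold TBA_congruence, fT.
  split; [|split; [|split; [|split; [|split; [|split; [|split; [|split]]]]]]].
  - intros U V [h1 [h2 _]]; auto.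
  - intros U hU; split; auto; split; auto; exists nil; split; [intros p []|intros; tauto].
  - intros U V [hU [hV [l [Hl HQ]]]]; split; auto; split; auto; exists l; split; auto.
    intros Q H; specialize (HQ Q H); tauto.
  - intros U V W [hU [hV [l1 [Hl1 HQ1]]]] [_ [hW [l2 [Hl2 HQ2]]]]; split; auto; split; auto.
    exists (l1 ++ l2); split.
    + intros p Hp; apply in_app_or in Hp; destruct Hp; auto.
    + intros Q H. rewrite (HQ1 Q), (HQ2 Q); [tauto| |]; intros; apply H; apply in_or_app; auto.
  - intros U V U' V' [hU [hV [l1 [Hl1 HQ1]]]] [hU' [hV' [l2 [Hl2 HQ2]]]].
    split; [apply clopen_meet; auto|split; [apply clopen_meet; auto|]].
    exists (l1 ++ l2); split.
    + intros p Hp; apply in_app_or in Hp; destruct Hp; auto.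
    + intros Q H. unfold Tmeet. rewrite (HQ1 Q), (HQ2 Q); [tauto| |]; intros; apply H; apply in_or_app; auto.
  - intros U V U' V' [hU [hV [l1 [Hl1 HQ1]]]] [hU' [hV' [l2 [Hl2 HQ2]]]].
    split; [apply clopen_join; auto|split; [apply clopen_join; auto|]].
    exists (l1 ++ l2); split.
    + intros p Hp; apply in_app_or in Hp; destruct Hp; auto.
    + intros Q H. unfold Tjoin. rewrite (HQ1 Q), (HQ2 Q); [tauto| |]; intros; apply H; apply in_or_app; auto.
  - intros U V [hU [hV [l [Hl HQ]]]].
    split; [apply clopen_compl; auto|split; [apply clopen_compl; auto|]].
    exists l; split; auto. intros Q H. unfold Tcompl. rewrite (HQ Q H); tauto.
  - intros U V [hU [hV [l [Hl HQ]]]].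
    split; [apply clopen_GA; auto|split; [apply clopen_GA; auto|]].
    exists (flat_map (fun p => [(im (fst p) (snd p), o1); (im (snd p) (fst p), o1)]) l). split.
    + intros q Hq. apply in_flat_map in Hq. destruct Hq as [[a b] [Hp Hq]].
      simpl in Hq. destruct Hq as [Hq|[Hq|[]]]; subst q; simpl; specialize (Hl _ Hp); simpl in Hl.
      * rewrite <- (iref b). apply thI; auto. apply thR; auto.
      * rewrite <- (iref a). apply thI; auto. apply thS; auto. apply thR; auto.
    + intros Q' H. pose proof (proj2_sig Q') as hQ'.
      assert (HY : forall Q, RA A Q' Q -> forall p, In p l -> (proj1_sig Q (fst p) <-> proj1_sig Q (snd p))).
      { intros Q HR [a b] Hp; simpl. split; apply HR.
        - apply (H (im a b, o1)); [apply in_flat_map; exists (a, b); split; simpl; auto|apply (pf1 _ hQ')].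
        - apply (H (im b a, o1)); [apply in_flat_map; exists (a, b); split; simpl; auto|apply (pf1 _ hQ')]. }
      unfold GA. split; intros h Q HR; apply (HQ Q (HY Q HR)); auto.
  - intros U V [hU [hV [l [Hl HQ]]]].
    split; [apply clopen_HA; auto|split; [apply clopen_HA; auto|]].
    exists (flat_map (fun p => [(ci (fst p) (snd p), z0); (ci (snd p) (fst p), z0)]) l). split.
    + intros q Hq. apply in_flat_map in Hq. destruct Hq as [[a b] [Hp Hq]].
      simpl in Hq. destruct Hq as [Hq|[Hq|[]]]; subst q; simpl; specialize (Hl _ Hp); simpl in Hl.
      * rewrite <- (cref b). apply thC; auto. apply thR; auto.
      * rewrite <- (cref a). apply thC; auto. apply thS; auto. apply thR; auto.
    + intros Q' H. pose proof (proj2_sig Q') as hQ'.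
      assert (HY : forall Q, SA A Q' Q -> forall p, In p l -> (proj1_sig Q (fst p) <-> proj1_sig Q (snd p))).
      { intros Q HS [a b] Hp; simpl. split; intro h1; apply NNPP; intro h2.
        - apply (pf0 _ hQ'). apply (H (ci a b, z0)); [apply in_flat_map; exists (a, b); split; simpl; auto|].
          apply HS; auto.
        - apply (pf0 _ hQ'). apply (H (ci b a, z0)); [apply in_flat_map; exists (a, b); split; simpl; auto|].
          apply HS; auto. }
      unfold HA. split; intros h Q HS; apply (HQ Q (HY Q HS)); auto.
Qed.

Lemma ps_ext (ps : (XA A -> Prop) -> (XA A -> Prop) -> Prop) U V U' V' :
  ps U V -> (forall Q, U Q <-> U' Q) -> (forall Q, V Q <-> V' Q) -> ps U' V'.
Proof.
  intros H h1 h2. rewrite <- (set_ext_gen U U' h1), <- (set_ext_gen V V' h2). auto.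
Qed.

Section Psi.
Variable ps : (XA A -> Prop) -> (XA A -> Prop) -> Prop.
Hypothesis hps : TBA_congruence A ps.
Lemma pcl : forall U V, ps U V -> tau_clopen A U /\ tau_clopen A V. Proof. apply hps. Qed.
Lemma prefl : forall U, tau_clopen A U -> ps U U. Proof. apply hps. Qed.
Lemma psym : forall U V, ps U V -> ps V U. Proof. apply hps. Qed.
Lemma ptrans : forall U V W, ps U V -> ps V W -> ps U W. Proof. apply hps. Qed.
Lemma pmeet : forall U V U' V', ps U V -> ps U' V' -> ps (Tmeet A U U') (Tmeet A V V'). Proof. apply hps. Qed.
Lemma pjoin : forall U V U' V', ps U V -> ps U' V' -> ps (Tjoin A U U') (Tjoin A V V'). Proof. apply hps. Qed.
Lemma pcompl : forall U V, ps U V -> ps (Tcompl A U) (Tcompl A V). Proof. apply hps. Qed.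
Lemma pG : forall U V, ps U V -> ps (GA A U) (GA A V). Proof. apply hps. Qed.
Lemma pH : forall U V, ps U V -> ps (HA A U) (HA A V). Proof. apply hps. Qed.

Lemma p_iff U V : ps U V -> ps (fun Q => U Q <-> V Q) full.
Proof.
  intro H. destruct (pcl U V H) as [hU hV].
  eapply ps_ext; [exact (pjoin _ _ _ _ (pmeet _ _ _ _ H (prefl V hV)) (pmeet _ _ _ _ (pcompl _ _ H) (prefl _ (clopen_compl V hV))))| |].
  - intro Q; unfold Tjoin, Tmeet, Tcompl. split; [tauto|]. intros [h1 h2].
    destruct (classic (U Q)); [left|right]; tauto.
  - intro Q; unfold Tjoin, Tmeet, Tcompl, full. split; [tauto|]. intros _. destruct (classic (V Q)); tauto.
Qed.
End Psi.

Lemma GA_sig x y Q' : GA A (Tjoin A (Tcompl A (sigmaA A x)) (sigmaA A y)) Q' <-> sigmaA A (im x y) Q'.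
Proof.
  unfold GA, Tjoin, Tcompl, sigmaA; rewrite sig_imp; split; intros h Q HR; specialize (h Q HR).
  - intro; destruct h; tauto.
  - destruct (classic (proj1_sig Q x)); tauto.
Qed.
Lemma HA_sig x y Q' : Tcompl A (HA A (Tcompl A (Tmeet A (sigmaA A x) (Tcompl A (sigmaA A y))))) Q' <-> sigmaA A (ci x y) Q'.
Proof.
  unfold HA, Tmeet, Tcompl, sigmaA; rewrite sig_coimp; split.
  - intro h. apply NNPP; intro h'. apply h. intros Q HS [h1 h2]. apply h'. exists Q; auto.
  - intros [Q [HS [h1 h2]]] h. apply (h Q HS). auto.
Qed.

Lemma g_WHB ps : TBA_congruence A ps -> WHB_congruence A (gT ps).
Proof.
  intro hps. unfold WHB_congruence, gT.
  split; [|split; [|split; [|split; [|split; [|split]]]]].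
  - intro a; apply (prefl _ hps), clopen_sig.
  - intros a b; apply (psym _ hps).
  - intros a b c; apply (ptrans _ hps).
  - intros a b c d H1 H2. eapply ps_ext; [exact (pmeet _ hps _ _ _ _ H1 H2)| |];
    intro Q; unfold Tmeet, sigmaA; rewrite (pf_m_iff _ (proj2_sig Q)); tauto.
  - intros a b c d H1 H2. eapply ps_ext; [exact (pjoin _ hps _ _ _ _ H1 H2)| |];
    intro Q; unfold Tjoin, sigmaA; rewrite (pf_j_iff _ (proj2_sig Q)); tauto.
  - intros a b c d H1 H2. eapply ps_ext; [exact (pG _ hps _ _ (pjoin _ hps _ _ _ _ (pcompl _ hps _ _ H1) H2))| |];
    apply GA_sig.
  - intros a b c d H1 H2.
    eapply ps_ext; [exact (pcompl _ hps _ _ (pH _ hps _ _ (pcompl _ hps _ _ (pmeet _ hps _ _ _ _ H1 (pcompl _ hps _ _ H2)))))| |];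
    apply HA_sig.
Qed.

Lemma gf th : WHB_congruence A th -> rel_eq (gT (fT th)) th.
Proof.
  intros hth a b. unfold gT, fT. split.
  - intros [_ [_ [l [Hl HQ]]]]. apply NNPP; intro Hn.
    destruct (th_sep th hth a b Hn) as [Q [Hsat Hab]]. apply Hab.
    apply (HQ Q). intros p Hp. apply Hsat. auto.
  - intro H. split; [apply clopen_sig|split; [apply clopen_sig|]].
    exists [(a, b)]. split; [intros p [<-|[]]; auto|].
    intros Q HQ. apply (HQ (a, b)). left; auto.
Qed.

Lemma fg ps : TBA_congruence A ps -> rel_eq (fT (gT ps)) ps.
Proof.
  intros hps U V. unfold fT, gT. split.
  - intros [hU [hV [l [Hl HQ]]]].
    set (Y := fun Q : XA A => forall p, In p l -> (proj1_sig Q (fst p) <-> proj1_sig Q (snd p))).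
    assert (psY : ps Y full).
    { unfold Y. clear HQ. induction l as [|p l IH].
      - eapply ps_ext; [exact (prefl _ hps _ clopen_full)| |]; intro Q; unfold full; split; auto.
        intros _ p [].
      - assert (H1 := p_iff _ hps _ _ (Hl p (or_introl eq_refl))).
        assert (H2 := IH (fun q Hq => Hl q (or_intror Hq))).
        eapply ps_ext; [exact (pmeet _ hps _ _ _ _ H1 H2)| |]; intro Q; unfold Tmeet, full, sigmaA.
        + split.
          * intros [h1 h2] q [Hq|Hq]; [subst q; auto|auto].
          * intro h. split; [apply h; left; auto|intros; apply h; right; auto].
        + tauto. }
    apply ptrans with (Tmeet A U full); auto.
    { eapply ps_ext; [exact (prefl _ hps U hU)| |]; intro Q; unfold Tmeet, full; tauto. }
    apply ptrans with (Tmeet A U Y); auto.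
    { apply (pmeet _ hps); [apply (prefl _ hps); auto|apply (psym _ hps); auto]. }
    apply ptrans with (Tmeet A V Y); auto.
    { eapply ps_ext; [exact (prefl _ hps (Tmeet A U Y) (clopen_meet _ _ hU (proj1 (pcl _ hps _ _ psY))))| |].
      - tauto.
      - intro Q; unfold Tmeet. split; intros [h1 h2]; split; auto; apply (HQ Q h2); auto. }
    apply ptrans with (Tmeet A V full); auto.
    { apply (pmeet _ hps); [apply (prefl _ hps); auto|auto]. }
    eapply ps_ext; [exact (prefl _ hps V hV)| |]; intro Q; unfold Tmeet, full; tauto.
  - intro H. destruct (pcl _ hps _ _ H) as [hU hV].
    assert (hW : tau_clopen A (fun Q => U Q <-> V Q)).
    { eapply clopen_ext; [|exact (clopen_meet _ _ (clopen_join _ _ (clopen_compl _ hU) hV) (clopen_join _ _ (clopen_compl _ hV) hU))].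
      intro Q; unfold Tmeet, Tjoin, Tcompl. split; [|tauto].
      intros [h1 h2]. split; intro h; [destruct h1|destruct h2]; tauto. }
    destruct (clopen_is_cnf _ hW) as [K HK].
    assert (psW := p_iff _ hps _ _ H).
    split; auto. split; auto.
    exists (map (fun p => (m (fst p) (snd p), fst p)) K). split.
    + intros q Hq. apply in_map_iff in Hq. destruct Hq as [[c d] [Hq Hp]]. subst q; simpl.
      eapply ps_ext; [exact (pjoin _ hps _ _ _ _ (prefl _ hps _ (clopen_sig (m c d))) (pmeet _ hps _ _ _ _ (prefl _ hps _ (clopen_sig c)) psW))| |];
      intro Q; unfold Tjoin, Tmeet, sigmaA, full; rewrite (pf_m_iff _ (proj2_sig Q)).
      * split; [|tauto]. intros [h|[h1 h2]]; auto. split; auto.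
        apply HK in h2. apply (h2 (c, d)); auto.
      * tauto.
    + intros Q HQ. apply HK. intros [c d] Hp Hc. simpl in *.
      assert (h := HQ (m c d, c) (in_map (fun p => (m (fst p) (snd p), fst p)) K (c, d) Hp)).
      simpl in h. apply h in Hc. apply (pf_m_iff _ (proj2_sig Q)) in Hc. tauto.
Qed.

Lemma mono th1 th2 : WHB_congruence A th1 -> WHB_congruence A th2 ->
  (rel_sub th1 th2 <-> rel_sub (fT th1) (fT th2)).
Proof.
  intros h1 h2. split.
  - intros Hs U V [hU [hV [l [Hl HQ]]]]. split; auto; split; auto. exists l; split; auto.
  - intros Hs a b H. apply (gf th2 h2 a b). apply Hs. apply (gf th1 h1 a b). auto.
Qed.

End Main.

Theorem theorem6p6 (A : WHBsig) (HA : is_WHB A) : con_lattices_isomorphic A.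
Proof.
  exists (fT A), (gT A). split; [|split; [|split; [|split]]].
  - intros; apply f_TBA; auto.
  - intros; apply g_WHB; auto.
  - intros; apply gf; auto.
  - intros; apply fg; auto.
  - intros; apply mono; auto.
Qed.
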